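(* Let $m\ge 6$ be an integer and let $G^*$ be a graph attaining the maximum spectral radius among all minimally 2-edge-connected graphs with $m$ edges. Then $\rho(G^* )>\sqrt{m-2}$.
   Context: Graphs are finite and simple. $\rho(G)$ denotes the largest eigenvalue of the adjacency matrix of $G$. A graph is minimally 2-edge-connected if it is 2-edge-connected but deleting any one edge leaves a graph that is not 2-edge-connected. *)

(* Defs.v *)
From HB Require Import structures.
From mathcomp Require Import all_boot all_order all_algebra.
From mathcomp Require Import polyrcf.
Set Implicit Arguments. Unset Strict Implicit. Unset Printing Implicit Defensive.
Import Order.TTheory GRing.Theory Num.Theory.
Local Open Scope ring_scope.

Definition simple_graph (T : finType) (e : rel T) : Prop :=
  irreflexive e /\ symmetric e.

Definition edges (T : finType) (e : rel T) : {set {set T}} :=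
  [set [set x; y] | x in T, y in T & e x y].

Definition nedges (T : finType) (e : rel T) : nat := #|edges e|%N.

Definition gconnected (T : finType) (e : rel T) : Prop :=
  forall x y : T, connect e x y.

Definition del_edge (T : finType) (e : rel T) (u v : T) : rel T :=
  fun x y => e x y && ([set x; y] != [set u; v]).

Definition two_edge_connected (T : finType) (e : rel T) : Prop :=
  gconnected e /\ forall u v, e u v -> gconnected (del_edge e u v).

Definition min_two_edge_connected (T : finType) (e : rel T) : Prop :=
  two_edge_connected e /\
  forall u v, e u v -> ~ two_edge_connected (del_edge e u v).

Definition adjmx (R : nzRingType) (T : finType) (e : rel T) : 'M[R]_#|T| :=
  \matrix_(i, j) (e (enum_val i) (enum_val j))%:R.

(* Largest eigenvalue (= largest real root of the characteristic polynomial;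
   the adjacency matrix is real symmetric so all eigenvalues are real).
   The default 0 is only relevant for the empty graph. *)
Definition spec_radius (R : rcfType) (T : finType) (e : rel T) : R :=
  \big[Num.max/0]_(x <- rootsR (char_poly (adjmx R e))) x.

(* Main.v *)
Require Import Defs.
From HB Require Import structures.
From mathcomp Require Import all_boot all_order all_algebra.
From mathcomp Require Import polyrcf ring lra zify.
Import Order.TTheory GRing.Theory Num.Theory.
Set Implicit Arguments. Unset Strict Implicit.

Section Gen.
Variable T : finType.
Implicit Types e : rel T.

Lemma doubleton_eq (a b c d : T) : [set a; b] = [set c; d] ->
  (a = c /\ b = d) \/ (a = d /\ b = c).
Proof.
move=> E.
have : a \in [set c; d] by rewrite -E !inE eqxx.
have : b \in [set c; d] by rewrite -E !inE eqxx orbT.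
have : c \in [set a; b] by rewrite E !inE eqxx.
have : d \in [set a; b] by rewrite E !inE eqxx orbT.
rewrite !inE.
by do 4 (case/orP=> /eqP ?); subst; auto.
Qed.

Lemma iso_connect e w t : (forall y, e w y = false) -> connect e w t -> t = w.
Proof. by move=> H /connectP[[|x p]] /=; [move=> _ -> | rewrite H]. Qed.

Lemma del_sym e u v : symmetric e -> symmetric (del_edge e u v).
Proof. by move=> s x y; rewrite /del_edge s setUC. Qed.

Lemma del_not2ec e (w a b t u v : T) :
  (forall y, e w y = (y == a) || (y == b)) -> a != b -> t != w ->
  [set u; v] = [set w; a] -> ~ two_edge_connected (del_edge e u v).
Proof.
move=> H ab tw E [_ H2].
have ewb : del_edge e u v w b.
  rewrite /del_edge H eqxx orbT E /=.
  apply/eqP => /doubleton_eq [[_ ba]|[wa bw]].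
    by rewrite ba eqxx in ab.
  by rewrite -wa bw eqxx in ab.
suff /eqP : t = w by rewrite (negbTE tw).
apply: (iso_connect _ (H2 _ _ ewb w t)) => y.
rewrite /del_edge H.
case: eqP => [->|_] /=; first by rewrite E eqxx.
idtac.
by case: eqP => [->|_] /=; rewrite ?eqxx ?andbF.
Qed.

End Gen.

Section Theta.
Variables n r : nat.
Definition V : finType := ((bool + 'I_n) + ('I_r * bool))%type.
Notation Hb h := (@inl _ ('I_r * bool)%type (@inl bool 'I_n h) : V).
Notation Mi i := (@inl _ ('I_r * bool)%type (@inr bool 'I_n i) : V).
Notation Pp p b := (@inr (bool + 'I_n)%type _ (p, b) : V).

Definition adj : rel V := fun x y => match x, y with
| inl (inl _), inl (inr _) => true
| inl (inr _), inl (inl _) => true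
| inl (inl h), inr (_, b) => h == b
| inr (_, b), inl (inl h) => h == b
| inr (p, b), inr (q, c) => (p == q) && (b != c)
| _, _ => false end.

Lemma adj_simple : simple_graph adj.
Proof.
split.
  by case=> [[h|i]|[p b]] //=; rewrite !eqxx.
case=> [[h|i]|[p b]] [[h'|i']|[q c]] //=; by rewrite eq_sym // (eq_sym c).
Qed.

Lemma core (S : {set V}) (e' : rel V) : (1 < n)%N -> symmetric e' ->
  (forall x y, adj x y -> [set x; y] != S -> e' x y) -> gconnected e'.
Proof.
move=> n2 se' He.
have c1 x y : adj x y -> [set x; y] != S -> connect e' x y.
  by move=> a k; apply: connect1; apply: He.
have cs := sym_connect_sym se'.
have csym x y : connect e' x y -> connect e' y x by rewrite cs.
have [i0 [i1 Hi]] : exists i0 i1 : 'I_n, i0 <> i1.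
  by exists (Ordinal (ltnW n2)), (Ordinal n2) => -[].
have hub : connect e' (Hb false) (Hb true).
  case: (boolP (([set Hb false; Mi i0] != S) && ([set Mi i0; Hb true] != S))).
    by case/andP=> k1 k2; apply: (connect_trans (c1 _ (Mi i0) _ k1)) => //; apply: c1.
  rewrite negb_and !negbK => /orP[]/eqP k; subst S;
   (apply: (@connect_trans _ _ (Mi i1)); apply: c1 => //;
    apply/eqP=> /doubleton_eq; intuition congruence).
have toH x : connect e' x (Hb false).
  case: x => [[[]|i]|[p []]].
  - by apply: csym.
  - by [].
  - case k: ([set Mi i; Hb false] != S); first by apply: c1.
    move/negbFE/eqP: k => k; apply: (connect_trans (c1 _ (Hb true) _ _)) => //.
      by subst S; apply/eqP=> /doubleton_eq; intuition congruence.
    by apply: csym.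
  - case k: ([set Pp p true; Hb true] != S).
      by apply: (connect_trans (c1 _ (Hb true) _ k)) => //; apply: csym.
    move/negbFE/eqP: k => k; apply: (connect_trans (c1 _ (Pp p false) _ _)).
    + by rewrite /= eqxx.
    + by subst S; apply/eqP=> /doubleton_eq; intuition congruence.
    + by apply: c1 => //; subst S; apply/eqP=> /doubleton_eq; intuition congruence.
  - case k: ([set Pp p false; Hb false] != S); first by apply: c1.
    move/negbFE/eqP: k => k; apply: (connect_trans (c1 _ (Pp p true) _ _)).
    + by rewrite /= eqxx.
    + by subst S; apply/eqP=> /doubleton_eq; intuition congruence.
    apply: (connect_trans (c1 _ (Hb true) _ _)) => //; last by apply: csym.
    by subst S; apply/eqP=> /doubleton_eq; intuition congruence.
move=> x y; apply: (connect_trans (toH x)); exact: csym.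
Qed.


Lemma adj_2ec : (1 < n)%N -> two_edge_connected adj.
Proof.
move=> n2; have [_ sa] := adj_simple; split.
  by apply: (core (S:=set0)) => // x y a _.
move=> u v _; apply: (core (S:=[set u; v])) => //; first exact: del_sym.
by move=> x y a k; rewrite /del_edge a k.
Qed.

Lemma nbM i y : adj (Mi i) y = (y == Hb false) || (y == Hb true).
Proof. by case: y => [[[]|j]|[p b]]. Qed.

Lemma nbP p b y : adj (Pp p b) y = (y == Hb b) || (y == Pp p (~~b)).
Proof.
case: y => [[h|j]|[q c]] /=; rewrite ?orbF //.
by case: b; case: c.
Qed.

Lemma adj_min u v : adj u v -> ~ two_edge_connected (del_edge adj u v).
Proof.
case: u v => [[h|i]|[p b]] [[h'|j]|[q c]] //= a.
- apply: (del_not2ec (w:=Mi j) (a:=Hb h) (b:=Hb (~~h)) (t:=Hb h)) => //.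
  + by move=> y; rewrite nbM; case: h; rewrite // orbC.
  + by case: h.
  + exact: setUC.
- move/eqP: a => a; subst c.
  apply: (del_not2ec (w:=Pp q h) (a:=Hb h) (b:=Pp q (~~h)) (t:=Hb h)) => //.
  + exact: nbP.
  + exact: setUC.
- apply: (del_not2ec (w:=Mi i) (a:=Hb h') (b:=Hb (~~h')) (t:=Hb h')) => //.
  + by move=> y; rewrite nbM; case: h'; rewrite // orbC.
  + by case: h'.
- move/eqP: a => a; subst h'.
  by apply: (del_not2ec (w:=Pp p b) (a:=Hb b) (b:=Pp p (~~b)) (t:=Hb b)) => //; exact: nbP.
- case/andP: a => /eqP pq bc; subst q.
  have -> : c = ~~ b by case: b c bc => [] [].
  apply: (del_not2ec (w:=Pp p b) (a:=Pp p (~~b)) (b:=Hb b) (t:=Hb b)) => //.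
  + by move=> y; rewrite nbP orbC.
Qed.

Definition L : finType := ((bool * 'I_n) + ('I_r * option bool))%type.
Definition lab (l : L) : {set V} := match l with
 | inl (h, i) => [set Hb h; Mi i]
 | inr (p, None) => [set Pp p false; Pp p true]
 | inr (p, Some b) => [set Hb b; Pp p b] end.

Lemma lab_inj : injective lab.
Proof.
case=> [[h i]|[p [b|]]] [[h' i']|[q [c|]]] /= /doubleton_eq; intuition congruence.
Qed.

Lemma edgesE : edges adj = lab @: setT.
Proof.
apply/setP=> s; apply/idP/idP.
  case/imset2P => x y _; rewrite inE => /andP[_ a] ->; apply/imsetP.
  case: x y a => [[h|i]|[p b]] [[h'|j]|[q c]] //= a.
  - by exists (inl (h, j)); rewrite ?in_setT.
  - by exists (inr (q, Some c)); rewrite ?in_setT // (eqP a).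
  - by exists (inl (h', i)); rewrite ?in_setT //= setUC.
  - by exists (inr (p, Some b)); rewrite ?in_setT //= setUC (eqP a).
  - case/andP: a => /eqP pq bc; subst q; exists (inr (p, None)); rewrite ?in_setT //=.
    by case: b c bc => [] [] //= _; rewrite setUC.
case/imsetP => l _ ->.
case: l => [[h i]|[p [b|]]] /=; apply: imset2_f; rewrite ?inE //= ?eqxx //.
Qed.

Lemma nedges_adj : nedges adj = (2 * n + 3 * r)%N.
Proof.
rewrite /nedges edgesE card_imset; last exact: lab_inj.
rewrite cardsT card_sum !card_prod card_option !card_ord card_bool.
by rewrite (mulnC r).
Qed.

End Theta.
Local Open Scope ring_scope.
Lemma bigmax_ge (R : realDomainType) (s : seq R) x :
  x \in s -> x <= \big[Num.max/0]_(y <- s) y.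
Proof.
elim: s => // y s IH; rewrite in_cons big_cons le_max.
by case/orP=> [/eqP->|/IH->]; rewrite ?lexx ?orbT.
Qed.


Section Eig.
Variables (R : rcfType) (n r : nat) (l : R).
Hypothesis hl : l ^+ 3 - l ^+ 2 - (2 * n + r)%:R * l + (2 * n)%:R = 0.

Definition g (x : V n r) : R := match x with
  | inl (inl _) => l * (l - 1) | inl (inr _) => 2 * (l - 1) | inr _ => l end.

Lemma pairE (F : 'I_r * bool -> R) :
  \sum_(z : 'I_r * bool) F z = \sum_(p < r) (F (p, true) + F (p, false)).
Proof.
rewrite (eq_bigr (fun z => F (z.1, z.2))); last by case.
rewrite -(pair_big xpredT xpredT (fun p b => F (p, b))) /=.
by apply: eq_bigr => p _; rewrite big_bool.
Qed.

Lemma eigE (y : V n r) : \sum_(x : V n r) g x * (adj x y)%:R = l * g y.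
Proof.
rewrite !big_sumType big_bool pairE.
case: y => [[h|j]|[q c]] /=; rewrite ?mulr0n ?mulr1n.
- have -> : \sum_(p < r) (l * (h == true)%:R + l * (h == false)%:R) = l *+ r.
    rewrite -[r in RHS]card_ord -sumr_const; apply: eq_bigr => p _.
    by case: h; rewrite /= ?mulr0n ?mulr1n ?mulr0 ?mulr1 ?addr0 ?add0r.
  rewrite !mulr0 !mulr1 !add0r sumr_const card_ord.
  apply/eqP; rewrite -subr_eq0; apply/eqP.
  transitivity (- (l ^+ 3 - l ^+ 2 - (2 * n + r)%:R * l + (2 * n)%:R)); last by rewrite hl oppr0.
  rewrite -[2 * (l - 1) *+ n]mulr_natr -[l *+ r]mulr_natr natrD !natrM; ring.
- rewrite !mulr0 !mulr1 big1 ?big1 //= ?addr0; last by [].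
  ring.
- rewrite big1 ?mulr0 ?addr0; last by [].
  case: c => /=; rewrite (bigD1 q) //= big1 => [|p /negbTE pq]; rewrite ?pq ?eqxx /= ?mulr0n ?mulr1n ?mulr0 ?mulr1 ?addr0 ?add0r //; try ring.
Qed.

Lemma l_le_spec : l * (l - 1) != 0 -> l <= spec_radius R (@adj n r).
Proof.
move=> nz.
pose v : 'rV[R]_#|V n r| := \row_j g (enum_val j).
have ev : eigenvalue (adjmx R (@adj n r)) l.
  apply/eigenvalueP; exists v.
    apply/rowP => j; rewrite !mxE.
    transitivity (\sum_(x : V n r) g x * (adj x (enum_val j))%:R); last by rewrite eigE.
    rewrite [RHS](reindex (@enum_val (V n r) (V n r))); last by apply: onW_bij; exact: enum_val_bij.
    by apply: eq_bigr => i _; rewrite !mxE.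
  apply/eqP => /rowP /(_ (enum_rank (inl (inl false) : V n r))).
  by rewrite !mxE enum_rankK /=; apply/eqP.
rewrite eigenvalue_root_char in ev.
rewrite /spec_radius; apply: bigmax_ge.
apply: (root_roots_on (roots_on_rootsR (monic_neq0 (char_poly_monic _)))) => //.
Qed.
End Eig.

Unset Implicit Arguments. Set Strict Implicit.

Lemma arith_ps (R : rcfType) (s Rr : R) : 2 <= s -> (Rr = 0 \/ Rr = 1) ->
  (2 * Rr - 2) * s - 3 * Rr + 2 < 0.
Proof. by move=> h [->|->]; lra. Qed.

Lemma arith_pb (R : rcfType) (N Rr : R) : 2 <= N -> 0 <= Rr -> 6 <= 2 * N + 3 * Rr ->
  0 < (2 * N + 3 * Rr) ^+ 3 - (2 * N + 3 * Rr) ^+ 2 - (2 * N + Rr) * (2 * N + 3 * Rr) + 2 * N.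
Proof.
move=> hN hR h6; set b := 2 * N + 3 * Rr.
have hb : 2 * N + Rr <= b by rewrite /b; lra.
rewrite !exprS expr0 mulr1.
nra.
Qed.

Lemma arith_sb (R : rcfType) (s N Rr : R) : 0 <= s -> s ^+ 2 = 2 * N + 3 * Rr - 2 ->
  6 <= 2 * N + 3 * Rr -> s <= 2 * N + 3 * Rr.
Proof. move=> s0; rewrite expr2 => h h6; nra. Qed.

Lemma arith_nz (R : rcfType) (l : R) : 2 < l -> l - 1 <> 0.
Proof. move=> h; lra. Qed.

Theorem lemma2p10 (R : rcfType) (m : nat) (T : finType) (e : rel T) :
  (6 <= m)%N ->
  simple_graph e -> nedges e = m -> min_two_edge_connected e ->
  (forall (T' : finType) (e' : rel T'),
      simple_graph e' -> nedges e' = m -> min_two_edge_connected e' ->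
      spec_radius R e' <= spec_radius R e) ->
  Num.sqrt ((m - 2)%N%:R : R) < spec_radius R e.
Proof.
move=> m6 _ _ _ Hmax.
have [n [r [hm [hn hr]]]] : exists n r, m = (2 * n + 3 * r)%N /\ (1 < n)%N /\ (r <= 1)%N.
  have := odd_double_half m; move: (m./2) => k.
  case: (odd m) => /= h; rewrite -mul2n in h.
    by exists k.-1, 1%N; lia.
  by exists k, 0%N; lia.
set s : R := Num.sqrt _.
have s0 : 0 <= s by apply: sqrtr_ge0.
have hs2 : s ^+ 2 = 2 * n%:R + 3 * r%:R - 2.
  rewrite sqr_sqrtr ?ler0n // natrB; last by lia.
  by rewrite hm natrD !natrM.
clearbody s.
have n2 : 2 <= (n%:R : R) by rewrite (ler_nat R 2 n).
have r0 : 0 <= (r%:R : R) by [].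
have r1 : (r%:R : R) <= 1 by rewrite (ler_nat R r 1).
have h6 : (6%:R : R) <= m%:R by rewrite ler_nat.
rewrite hm natrD !natrM in h6.
have s2 : 2 <= s by rewrite expr2 in hs2; nra.
pose p : {poly R} := 'X^3 - 'X^2 - ((2 * n + r)%:R)%:P * 'X + ((2 * n)%:R)%:P.
have pE x : p.[x] = x ^+ 3 - x ^+ 2 - (2 * n + r)%:R * x + (2 * n)%:R.
  by rewrite /p !hornerE.
pose b : R := (2 * n + 3 * r)%:R.
have hb : b = 2 * n%:R + 3 * r%:R by rewrite /b natrD !natrM.
have ps : p.[s] < 0.
  have -> : p.[s] = (2 * r%:R - 2) * s - 3 * r%:R + 2.
    rewrite pE natrD !natrM.
    have -> : s ^+ 3 = s * s ^+ 2 by rewrite exprS.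
    rewrite hs2; ring.
  apply: arith_ps s2 _.
  by move: hr; case: (r) => [|[|]] //; [left|right].
have pb : 0 < p.[b].
  rewrite pE hb natrD !natrM; exact: arith_pb.
have sb : s <= b by rewrite hb; exact: arith_sb.
have pm : p.[s] * p.[b] < 0 by rewrite pmulr_llt0.
have [l] := poly_ivtoo sb pm; rewrite in_itv /= => /andP[ls lb] rl.
have l2 : 2 < l := le_lt_trans s2 ls.
have hl : l ^+ 3 - l ^+ 2 - (2 * n + r)%:R * l + (2 * n)%:R = 0.
  by rewrite -pE; apply/eqP.
apply: (lt_le_trans ls); apply: le_trans (Hmax _ _ _ _ _).
- apply: (l_le_spec hl); rewrite mulf_neq0 //; last by apply/eqP; exact: arith_nz.
  by rewrite gt_eqF // (lt_trans _ l2).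
- exact: adj_simple.
- by rewrite nedges_adj hm.
- by split; [exact: adj_2ec | exact: adj_min].
Qed.
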